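(* Let $\sigma>0$, $\varepsilon>0$, $D=\ln(1/\varepsilon)+n\ln 8$, and $I=\{x\in(\mathbb{N}\cup\{0\})^n:\sum_{j=1}^n u(x_j)<D\}$. Then $$|I|\le\sum_{q=0}^n 2^{n-q}\binom{n}{n-q}\mathrm{Vol}(X_q),$$ where $X_q=\{x\in[0,+\infty)^q:\sum_{j=1}^q u(x_j)<D-(n-q)\Delta(\sigma)\}$ and $\mathrm{Vol}$ is $q$-dimensional Lebesgue measure.
   Context: $u(x)=\frac{x}{2}\ln\big(\frac{2}{e}x\big)-x\ln\sigma$ for $x>0$, $u(0)=0$; $r=\lfloor\sigma^2/2\rfloor$; $\Delta(\sigma)=\min\{u(r),u(r+1)\}$. *)

(* Defs.v *)
From HB Require Import structures.
From mathcomp Require Import all_boot all_order all_algebra.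
From mathcomp Require Import all_classical all_reals all_analysis.
Unset Printing Implicit Defensive.
Import Order.TTheory GRing.Theory Num.Theory.
Local Open Scope classical_set_scope.
Local Open Scope ring_scope.

(* u(x) = x/2 ln(2x/e) - x ln sigma for x > 0, u(0) = 0
   (u is only ever applied to nonnegative arguments; we set it to 0 for x <= 0). *)
Definition u {R : realType} (sigma x : R) : R :=
  if 0 < x then x / 2 * ln (2 / expR 1 * x) - x * ln sigma else 0.

Definition r_of {R : realType} (sigma : R) : nat := Num.truncn (sigma ^+ 2 / 2).

Definition Delta {R : realType} (sigma : R) : R :=
  Num.min (u sigma (r_of sigma)%:R) (u sigma (r_of sigma).+1%:R).

(* q-dimensional Lebesgue measure on q-tuples of reals, defined as the
   iterated (Fubini) product of the one-dimensional Lebesgue measure: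
   Vol_0 A = 1 if the empty tuple is in A, 0 otherwise;
   Vol_{q+1} A = \int dx Vol_q { t | (x :: t) \in A }. *)
Fixpoint vol {R : realType} (q : nat) : set (q.-tuple R) -> \bar R :=
  match q with
  | 0 => fun A => if `[< A [tuple] >] then 1%E else 0%E
  | q'.+1 => fun A =>
      (\int[@lebesgue_measure R]_x vol q' (fun t : q'.-tuple R => A (cons_tuple x t)))%E
  end.

Definition Dval {R : realType} (eps : R) (n : nat) : R :=
  ln (1 / eps) + n%:R * ln 8.

Definition Iset {R : realType} (sigma eps : R) (n : nat) : set (n.-tuple nat) :=
  [set x | \sum_(j < n) u sigma (tnth x j)%:R < Dval eps n].

Definition Xset {R : realType} (sigma eps : R) (n q : nat) : set (q.-tuple R) :=
  [set x | (forall j, 0 <= tnth x j) /\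
     \sum_(j < q) u sigma (tnth x j) < Dval eps n - (n - q)%:R * Delta sigma].

(* Main.v *)
Require Import Defs.
From HB Require Import structures.
From mathcomp Require Import all_boot all_order all_algebra.
From mathcomp Require Import all_classical all_reals all_analysis.
From mathcomp Require Import measurable_realfun.
From mathcomp Require Import ring lra zify.
Import Order.TTheory GRing.Theory Num.Theory.
Local Open Scope classical_set_scope.
Local Open Scope ring_scope.
Section U.
Variables (R : realType) (sigma : R).
Hypothesis s0 : 0 < sigma.
Let m := sigma ^+ 2 / 2.
Let m0 : 0 < m. Proof. rewrite /m; apply: divr_gt0 => //; exact: exprn_gt0. Qed.

Lemma ln_le_sub1 (y : R) : 0 < y -> ln y <= y - 1.
Proof.
move=> y0; have := expR_ge1Dx (ln y); rewrite lnK ?posrE //; lra.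
Qed.

Lemma u_form (x : R) : 0 < x -> u sigma x = x / 2 * (ln x - ln m - 1).
Proof.
move=> x0; rewrite /u x0 /m.
have e0 : 0 < expR (1:R) by exact: expR_gt0.
have e1 : 0 < 2 / expR (1:R) by apply: divr_gt0.
have e2 : 0 < (expR (1:R))^-1 by rewrite invr_gt0.
have s20 : 0 < sigma ^+ 2 by exact: exprn_gt0.
have i2 : 0 < (2:R)^-1 by rewrite invr_gt0.
have h1 : ln (2 / expR 1 * x) = ln 2 - 1 + ln x.
  by rewrite lnM ?posrE // lnM ?posrE // lnV ?posrE // expRK.
have h2 : ln (sigma ^+ 2 / 2) = ln sigma + ln sigma - ln 2.
  by rewrite lnM ?posrE // lnV ?posrE // lnXn // mulr2n.
rewrite h1 h2.
lra.
Qed.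

Lemma lnB_le (a b : R) : 0 < a -> 0 < b -> a * (ln b - ln a) <= b - a.
Proof.
move=> a0 b0; have := ln_le_sub1 (b / a) (divr_gt0 b0 a0).
rewrite lnM ?posrE ?invr_gt0 // lnV ?posrE // => h.
have := ler_wpM2l (ltW a0) h.
have -> : a * (b / a - 1) = b - a by field; rewrite gt_eqF.
lra.
Qed.

Lemma u_dec (a b : R) : 0 < a -> a <= b -> b <= m -> u sigma b <= u sigma a.
Proof.
move=> a0 ab bm; have b0 : 0 < b by lra.
rewrite !u_form //.
have h1 := lnB_le a b a0 b0.
have h2 : ln b <= ln m by rewrite ler_ln ?posrE.
have h3 : 0 <= (b - a) * (ln m - ln b) by apply: mulr_ge0; lra.
have key : b * (ln b - ln m - 1) <= a * (ln a - ln m - 1).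
  move: h1 h3; rewrite ?(mulrBr, mulrBl, mulrDr, mulrDl, mulr1, mul1r); lra.
lra.
Qed.

Lemma u_inc (a b : R) : m <= a -> a <= b -> u sigma a <= u sigma b.
Proof.
move=> ma ab; have m1 := m0; have a0 : 0 < a by lra. have b0 : 0 < b by lra.
rewrite !u_form //.
have h1 := lnB_le b a b0 a0.
have h2 : ln m <= ln a by rewrite ler_ln ?posrE.
have h3 : 0 <= (b - a) * (ln a - ln m) by apply: mulr_ge0; lra.
have key : a * (ln a - ln m - 1) <= b * (ln b - ln m - 1).
  move: h1 h3; rewrite ?(mulrBr, mulrBl, mulrDr, mulrDl, mulr1, mul1r); lra.
lra.
Qed.

Lemma u_le0 (x : R) : x <= m -> u sigma x <= 0.
Proof.
move=> xm; case: (boolP (0 < x)) => x0; last by rewrite /u (negbTE x0).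
rewrite u_form //.
have h2 : ln x <= ln m by rewrite ler_ln ?posrE.
have : x * (ln x - ln m - 1) <= 0 by apply: mulr_ge0_le0; lra.
lra.
Qed.
End U.

Section M.
Variable R : realType.
Local Notation mu := (@lebesgue_measure R).

Lemma int_le (f g : R -> \bar R) : (forall x, 0 <= f x)%E -> (forall x, f x <= g x)%E ->
  (\int[mu]_x f x <= \int[mu]_x g x)%E.
Proof.
move=> f0 fg.
have g0 : forall x, (0 <= g x)%E by move=> x; exact: le_trans (f0 x) (fg x).
rewrite !ge0_integralTE //.
apply: ereal_sup_le => _ [h hf <-]; exists h => //= x.
exact: le_trans (hf x) (fg x).
Qed.

Lemma vol_ge0 q (A : set (q.-tuple R)) : (0 <= vol q A)%E.
Proof.
elim: q A => [|q IH] A /=; first by case: ifP.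
by apply: integral_ge0 => x _; exact: IH.
Qed.

Lemma vol_le q (A B : set (q.-tuple R)) : A `<=` B -> (vol q A <= vol q B)%E.
Proof.
elim: q A B => [|q IH] A B AB /=.
  case: (asboolP (A [tuple])) => HA; case: (asboolP (B [tuple])) => HB //.
  by exfalso; apply: HB; exact: AB.
apply: int_le => x; first exact: vol_ge0.
by apply: IH => t; exact: AB.
Qed.

Lemma step_le (g : R -> \bar R) (s : seq nat) (c : nat -> \bar R) (a : nat -> nat) :
  uniq (map a s) -> (forall k, 0 <= c k)%E -> (forall x, 0 <= g x)%E ->
  (forall k x, k \in s -> (a k)%:R <= x < (a k)%:R + 1 -> (c k <= g x)%E) ->
  (\sum_(k <- s) c k <= \int[mu]_x g x)%E.
Proof.
move=> us c0 g0 cg.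
pose cube k := [set x : R | (a k)%:R <= x < (a k)%:R + 1].
have mcube k : measurable (cube k).
  have -> : cube k = [set` `[(a k)%:R, (a k)%:R + 1[%R].
    by apply/seteqP; split => x /=; rewrite in_itv.
  exact: measurable_itv.
pose F k : R -> \bar R := (cst (c k)) \_ (cube k).
have mF k : measurable_fun setT (F k).
  by apply/(measurable_restrictT _ _).1 => //; exact: measurable_cst.
have F0 k x : (0 <= F k x)%E by rewrite /F /patch; case: ifP => _ //; exact: c0.
have -> : (\sum_(k <- s) c k = \int[mu]_x (\sum_(k <- s) F k x))%E.
  rewrite ge0_integral_sum //; apply: eq_bigr => k _.
  rewrite /F -integral_mkcond integral_cst; last exact: mcube.
  have -> : cube k = [set` `[(a k)%:R, (a k)%:R + 1[%R].
    by apply/seteqP; split => x /=; rewrite in_itv.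
  set L := (X in (_ * X)%E).
  have -> : L = 1%E.
    have := @lebesgue_measure_itv R `[(a k)%:R, (a k)%:R + 1[%R.
    rewrite /= lte_fin ltrDl ltr01 -EFinD addrAC subrr add0r => <-.
    by [].
  by rewrite mule1.
apply: int_le => x; first by apply: sume_ge0 => k _; exact: F0.
elim: s us cg => [|k s IH] /= us cg; first by rewrite big_nil.
rewrite big_cons; move/andP: us => [kns us].
have cgs : forall k' x, k' \in s -> (a k')%:R <= x < (a k')%:R + 1 -> (c k' <= g x)%E.
  by move=> k' y ks; apply: cg; rewrite inE ks orbT.
rewrite {1}/F /patch; case: ifPn => [xk|xk].
  rewrite big1_seq ?adde0; last first.
    move=> k' /andP [_ k's]; rewrite /F /patch; case: ifPn => // xk'.
    exfalso; move: xk xk'; rewrite !inE /cube /= => /andP [h1 h2] /andP [h3 h4].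
    have e : a k' = a k.
      apply/eqP; rewrite eqn_leq; apply/andP; split.
        by rewrite -ltnS -(ltr_nat R) -natr1; lra.
      by rewrite -ltnS -(ltr_nat R) -natr1; lra.
    by move: kns; rewrite -e map_f.
  by apply: cg; [rewrite inE eqxx | move: xk; rewrite inE].
by rewrite add0e; exact: IH.
Qed.
End M.

Section Main.
Variables (R : realType) (sigma : R).
Hypothesis s0 : 0 < sigma.
Let r := r_of sigma.
Definition phi (k : nat) : nat := if (k < r)%N then k else k.-1.

Lemma cube_u (k : nat) (x : R) : k != r -> k != r.+1 ->
  (phi k)%:R <= x < (phi k)%:R + 1 -> 0 <= x /\ u sigma x <= u sigma k%:R.
Proof.
move=> kr kr1 /andP [h1 h2].
have m0 : 0 <= sigma ^+ 2 / 2 by apply: divr_ge0 => //; exact: sqr_ge0.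
have /andP [rm mr] := truncn_itv m0.
rewrite -/(r_of sigma) -/r in rm mr.
have {mr} mr : sigma ^+ 2 / 2 < r%:R + 1 by rewrite natr1.
move: h1 h2; rewrite /phi; case: ifPn => kltr h1 h2.
  have x0 : 0 <= x by apply: le_trans h1; exact: ler0n.
  split => //.
  have kr' : (k.+1 <= r)%N := kltr.
  have : k.+1%:R <= r%:R :> R by rewrite ler_nat.
  rewrite -natr1 => kr2.
  have xm : x <= sigma ^+ 2 / 2 by lra.
  case: (posnP k) => [k0|kpos].
    rewrite k0 /u ltxx; exact: u_le0.
  apply: u_dec => //; rewrite ltr0n //.
have kr2 : (r.+2 <= k)%N by lia.
have : r.+2%:R <= k%:R :> R by rewrite ler_nat.
rewrite -!natr1 => hk.
have hk1 : k.-1%:R = k%:R - 1 :> R.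
  by rewrite -[in RHS](prednK (_ : (0 < k)%N)) ?(ltn_trans _ kr2) // -natr1 addrK.
rewrite hk1 in h1 h2.
have := ler0n R r.
split; first by lra.
apply: u_inc => //; lra.
Qed.

Definition Xc (q : nat) (c : R) : set (q.-tuple R) :=
  [set x | (forall j, 0 <= tnth x j) /\ \sum_(j < q) u sigma (tnth x j) < c].

Lemma tnth_cons0 (T : Type) q (x : T) (t : q.-tuple T) : tnth (cons_tuple x t) ord0 = x.
Proof. by []. Qed.

Lemma tnth_consS (T : Type) q (x : T) (t : q.-tuple T) j :
  tnth (cons_tuple x t) (lift ord0 j) = tnth t j.
Proof. by rewrite !(tnth_nth x). Qed.

Lemma V_step q d M (P : pred nat) :
  (forall k, P k -> k != r /\ k != r.+1) ->
  (\sum_(k < M | P k) vol q (Xc q (d - u sigma k%:R)) <= vol q.+1 (Xc q.+1 d))%E.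
Proof.
move=> HP.
rewrite -(big_mkord P (fun k => vol q (Xc q (d - u sigma k%:R)))) -big_filter.
apply: (@step_le R _ _ _ phi).
- rewrite map_inj_in_uniq ?filter_uniq ?iota_uniq //.
  move=> k1 k2; rewrite !mem_filter => /andP [/HP [h1 h2] _] /andP [/HP [h3 h4] _].
  rewrite /phi; case: ifPn; case: ifPn; lia.
- by move=> k; exact: vol_ge0.
- by move=> x; exact: vol_ge0.
move=> k x; rewrite mem_filter => /andP [/HP [h1 h2] _] hx.
have [x0 uxk] := cube_u k x h1 h2 hx.
apply: vol_le => t [t0 ts]; split.
  move=> j; case: (unliftP ord0 j) => [j' ->|->]; first by rewrite tnth_consS.
  by rewrite tnth_cons0.
rewrite big_ord_recl tnth_cons0.
under eq_bigr do rewrite tnth_consS.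
lra.
Qed.


Definition Bnd n c := (\sum_(q < n.+1)
  ((2 ^ (n - q) * 'C(n, n - q))%:R)%:E * vol q (Xc q (c - (n - q)%:R * Delta sigma)))%E.

Lemma Bnd_ge0 n c : (0 <= Bnd n c)%E.
Proof. by apply: sume_ge0 => q _; apply: mule_ge0; [rewrite lee_fin ler0n | exact: vol_ge0]. Qed.

Lemma Xc_mono q c c' : c <= c' -> Xc q c `<=` Xc q c'.
Proof. by move=> cc x [h1 h2]; split => //; lra. Qed.

Lemma Bnd_mono n c c' : c <= c' -> (Bnd n c <= Bnd n c')%E.
Proof.
move=> cc; apply: lee_sum => q _; apply: lee_wpmul2l; first by rewrite lee_fin ler0n.
apply: vol_le; apply: Xc_mono; lra.
Qed.

Definition Tm n c q := (((2 ^ (n - q) * 'C(n, n - q))%:R)%:E *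
  vol q (Xc q (c - (n - q)%:R * Delta sigma)))%E.
Definition Wm n c q := (((2 ^ (n - q) * 'C(n, n - q))%:R)%:E *
  vol q.+1 (Xc q.+1 (c - (n - q)%:R * Delta sigma)))%E.

Lemma Tm_ge0 n c q : (0 <= Tm n c q)%E.
Proof. by apply: mule_ge0; [rewrite lee_fin ler0n | exact: vol_ge0]. Qed.

Lemma BndE n c : Bnd n c = (\sum_(0 <= q < n.+1) Tm n c q)%E.
Proof. by rewrite big_mkord. Qed.

Lemma Bnd_succ n c : Bnd n.+1 c = (Bnd n (c - Delta sigma) + Bnd n (c - Delta sigma) +
  \sum_(0 <= q < n.+1) Wm n c q)%E.
Proof.
set D := Delta sigma.
rewrite !BndE big_nat_recl // big_nat_recr //= big_nat_recl // big_nat_recr //=.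
have h1 : Tm n.+1 c 0 = (Tm n (c - D) 0 + Tm n (c - D) 0)%E.
  rewrite /Tm !subn0 !binn !muln1 -/D.
  have -> : c - n.+1%:R * D = c - D - n%:R * D by rewrite -natr1; lra.
  rewrite -ge0_muleDl ?lee_fin ?ler0n //; congr (_ * _)%E.
  by rewrite -EFinD -natrD expnS mul2n addnn.
have h2 : Tm n.+1 c n.+1 = Wm n c n.
  by rewrite /Tm /Wm !subnn !bin0.
have h3 : (\sum_(0 <= q < n) Tm n.+1 c q.+1 =
   \sum_(0 <= q < n) Tm n (c - D) q.+1 + \sum_(0 <= q < n) Tm n (c - D) q.+1 +
   \sum_(0 <= q < n) Wm n c q)%E.
  rewrite -!big_split /=; rewrite big_nat_cond [in RHS]big_nat_cond.
  apply: eq_bigr => i /andP [/andP [_ hi] _].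
  rewrite /Tm /Wm subSS -/D.
  have E1 : c - D - (n - i.+1)%:R * D = c - (n - i)%:R * D.
    have -> : (n - i = (n - i.+1).+1)%N by lia.
    rewrite -natr1; lra.
  rewrite E1.
  have Ev : (0 <= vol i.+1 (Xc i.+1 (c - (n - i)%:R * D)))%E by exact: vol_ge0.
  rewrite -!ge0_muleDl ?lee_fin ?ler0n ?addr_ge0 //; congr (_ * _)%E.
  rewrite -!EFinD -!natrD; congr (_%:R)%:E.
  have -> : (n - i = (n - i.+1).+1)%N by lia.
  set m := (n - i.+1)%N.
  rewrite binS expnS; ring.
rewrite h1 h2 h3.
rewrite !addeA; congr (_ + _)%E.
rewrite -!addeA; congr (_ + _)%E.
rewrite [in RHS]addeC -!addeA; congr (_ + _)%E.
rewrite addeC -!addeA; congr (_ + _)%E.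
Qed.

Lemma count_sum (T : eqType) (s : seq T) (h : T -> nat) M (P : pred nat) :
  (forall x, x \in s -> (h x < M)%N) ->
  count (fun x => P (h x)) s = (\sum_(k < M | P k) count (fun x => h x == k) s)%N.
Proof.
elim: s => [|x s IH] hs /=; first by rewrite big1.
rewrite IH; last by move=> y ys; apply: hs; rewrite inE ys orbT.
rewrite big_split /=; congr (_ + _)%N.
have hx : (h x < M)%N by apply: hs; rewrite inE eqxx.
case: (boolP (P (h x))) => Px.
  rewrite (bigD1 (Ordinal hx)) //= eqxx big1 // => k /andP [_ kne].
  apply/eqP; rewrite eqb0; move: kne; apply: contra => /eqP e.
  by apply/eqP; apply: val_inj; rewrite /= e.
rewrite big1 // => k Pk; case: eqP => // e.
by move: Px; rewrite e Pk.
Qed.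

Lemma size_split (T : eqType) (s : seq T) (h : T -> nat) k :
  size s = (count (fun x => h x == k) s + count (fun x => h x == k.+1) s +
            count (fun x => (h x != k) && (h x != k.+1)) s)%N.
Proof.
elim: s => [|x s IH] //=; rewrite IH.
have [->|e1] := eqVneq (h x) k.
  by rewrite (ltn_eqF (ltnSn k)) /=; lia.
by case: (h x == k.+1) => /=; lia.
Qed.

Lemma sum_head n (x : n.+1.-tuple nat) :
  \sum_(j < n.+1) u sigma (tnth x j)%:R =
  u sigma (thead x)%:R + \sum_(j < n) u sigma (tnth [tuple of behead x] j)%:R.
Proof.
rewrite big_ord_recl; congr (_ + _); apply: eq_bigr => j _.
by rewrite !(tnth_nth 0%N) /= nth_behead.
Qed.

Lemma claim n : forall c (s : seq (n.-tuple nat)), uniq s ->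
  (forall x, x \in s -> \sum_(j < n) u sigma (tnth x j)%:R < c) ->
  (((size s)%:R)%:E <= Bnd n c)%E.
Proof.
elim: n => [|n IH] c s us hs.
  case: s us hs => [|x s] us hs; first by rewrite /= Bnd_ge0.
  have -> : s = [::].
    case: s us {hs} => // y s /= /andP [+ _].
    by rewrite (tuple0 x) (tuple0 y) inE eqxx.
  rewrite /Bnd big_ord1 /= subn0 expn0 bin0 muln1.
  have hx := hs x (mem_head _ _); rewrite big_ord0 in hx.
  rewrite asboolT ?mule1 //; split; first by case.
  by rewrite big_ord0 mul0r subr0.
pose hd (x : n.+1.-tuple nat) := thead x.
pose tl (x : n.+1.-tuple nat) : n.-tuple nat := [tuple of behead x].
have cntk k : (((count (fun x => hd x == k) s)%:R)%:E <= Bnd n (c - u sigma k%:R))%E.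
  rewrite -size_filter -(size_map tl); apply: IH.
    rewrite map_inj_in_uniq ?filter_uniq // => x y.
    rewrite !mem_filter => /andP [hx _] /andP [hy _] e.
    rewrite (tuple_eta x) (tuple_eta y); apply: val_inj => /=.
    move: hx hy; rewrite /hd => /eqP -> /eqP ->; congr (_ :: _).
    by move: e => /(congr1 val).
  move=> y /mapP [x]; rewrite mem_filter => /andP [/eqP hx xs] ->.
  have := hs x xs; rewrite sum_head -/(hd x) hx; lra.
have hDr : Delta sigma <= u sigma r%:R by rewrite /Delta ge_min lexx.
have hDr1 : Delta sigma <= u sigma r.+1%:R by rewrite /Delta ge_min lexx orbT.
pose M := (\max_(x <- s) (hd x).+1)%N.
have hM : forall x, x \in s -> (hd x < M)%N.
  by move=> x xs; rewrite /M; exact: (@leq_bigmax_seq _ _ predT (fun x => (hd x).+1)).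
pose P := fun k : nat => (k != r) && (k != r.+1).
rewrite (size_split _ s hd r).
rewrite (count_sum _ s hd M P hM).
rewrite !natrD !EFinD natr_sum -sumEFin.
rewrite Bnd_succ.
apply: leeD; first apply: leeD.
- apply: le_trans (cntk r) _; apply: Bnd_mono; lra.
- apply: le_trans (cntk r.+1) _; apply: Bnd_mono; lra.
apply: (@le_trans _ _ (\sum_(k < M | P k) Bnd n (c - u sigma k%:R))%E); first by apply: lee_sum => k _; exact: cntk.
under eq_bigr do rewrite BndE.
rewrite exchange_big /=; apply: lee_sum => q _.
rewrite /Tm /Wm.
have Hc : forall k : 'I_M, P k -> (c - u sigma k%:R) - (n - q)%:R * Delta sigma =
    (c - (n - q)%:R * Delta sigma) - u sigma k%:R.
  by move=> k _; lra.
under eq_bigr => k Pk do rewrite (Hc k Pk).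
rewrite -ge0_sume_distrr; last by move=> k _; exact: vol_ge0.
apply: lee_wpmul2l; first by rewrite lee_fin ler0n.
apply: V_step => k; rewrite /P => /andP [h1 h2]; split => //.
Qed.

End Main.

Lemma sum1_size (R : realType) (T : Type) (s : seq T) :
  (\sum_(x <- s) (1 : \bar R))%E = ((size s)%:R)%:E.
Proof.
elim: s => [|x s IH]; first by rewrite big_nil.
by rewrite big_cons IH /= -EFinD -natr1 addrC.
Qed.

Theorem lemma11 (R : realType) (sigma eps : R) (n : nat) :
  0 < sigma -> 0 < eps ->
  (\esum_(x in Iset sigma eps n) 1 <=
   \sum_(q < n.+1) ((2 ^ (n - q) * 'C(n, n - q))%:R)%:E * vol q (Xset sigma eps n q))%E.
Proof.
move=> s0 _.
apply: ge_ereal_sup => _ [A [finA AI] <-].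
rewrite fsbig_finite // sum1_size.
rewrite -[X in (_ <= X)%E]/(Bnd R sigma n (Dval eps n)).
apply: (claim R sigma s0 n (Dval eps n)) => [|x]; first exact: finmap.fset_uniq.
rewrite in_fset_set // inE => /AI.
by [].
Qed.
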